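(* Let $C:2^M\to\mathbb{R}_{\ge 0}$ be a normalized cost function. There is a unique function $P_C$ on allocations with $P_C(\vec\emptyset)=0$ such that for every allocation $\vec S=(S_1,\dots,S_n)$, $$\sum_{i\in N}\left[P_C(\vec S)-P_C(\vec S-S_i)\right]=C(\vec S).$$ Moreover, this function is given by $$P_C(\vec S)=\sum_{\emptyset\neq I\subseteq N}\frac{C\left(\bigcup_{i\in I}S_i\right)}{|I|\cdot\binom{n}{|I|}}.$$
   Context: Setting. $N=\{1,\dots,n\}$ is a set of players and $M_1,\dots,M_n$ are pairwise disjoint finite sets; $M=\bigcup_i M_i$. An allocation is a vector $\vec S=(S_1,\dots,S_n)$ with $S_i\subseteq M_i$; since the $M_i$ are disjoint, allocations are identified with subsets $\bigcup_i S_i$ of $M$, so a function on allocations is a set function on $2^M$. Set operations between allocations are componentwise, $\vec\emptyset=(\emptyset,\dots,\emptyset)$, and $\vec S-S_i$ denotes the allocation obtained from $\vec S$ by replacing its $i$-th component with $\emptyset$. A cost function $C:2^M\to\mathbb{R}_{\ge0}$ is normalized if $C(\emptyset)=0$. *)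

(* Defs.v *)
From HB Require Import structures.
From mathcomp Require Import all_boot all_order all_algebra.
Set Implicit Arguments. Unset Strict Implicit. Unset Printing Implicit Defensive.
Import Order.TTheory GRing.Theory Num.Theory.
Local Open Scope ring_scope.

(* Resources: a finite type T (= M).  The pairwise disjoint
   sets M_i are encoded by an ownership map owner : T -> 'I_n, with
   M_i = [set x | owner x == i].  An allocation is identified with a subset
   S of M; its i-th component is S_i = S :&: M_i. *)

Definition Mi (T : finType) (n : nat) (owner : T -> 'I_n) (i : 'I_n) : {set T} :=
  [set x | owner x == i].

Definition comp (T : finType) (n : nat) (owner : T -> 'I_n) (S : {set T}) (i : 'I_n)
  : {set T} := S :&: Mi owner i.

(* S - S_i : replace the i-th component by the empty set *)
Definition remove_comp (T : finType) (n : nat) (owner : T -> 'I_n) (S : {set T})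
  (i : 'I_n) : {set T} := S :\: Mi owner i.

Definition PC (R : realFieldType) (T : finType) (n : nat) (owner : T -> 'I_n)
  (C : {set T} -> R) (S : {set T}) : R :=
  \sum_(I : {set 'I_n} | I != set0)
     C (\bigcup_(i in I) comp owner S i) / ((#|I| * 'C(n, #|I|))%N)%:R.

(* Main.v *)
Require Import Defs.
From HB Require Import structures.
From mathcomp Require Import all_boot all_order all_algebra.
Import Order.TTheory GRing.Theory Num.Theory.
Local Open Scope ring_scope.

From mathcomp Require Import ring.
Lemma helperK (R : realFieldType) (x : R) (m b : nat) : (0 < m)%N -> (0 < b)%N ->
  x / ((m * b)%N)%:R *+ m = x / b%:R.
Proof.
move=> m0 b0; rewrite -mulr_natr natrM.
have m0' : (m%:R : R) != 0 by rewrite pnatr_eq0 -lt0n.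
have b0' : (b%:R : R) != 0 by rewrite pnatr_eq0 -lt0n.
by rewrite invfM mulrA mulrAC divfK.
Qed.

Section Aux.
Variables (R : realFieldType) (T : finType) (n : nat) (owner : T -> 'I_n)
  (C : {set T} -> R) (C_norm : C set0 = 0).

Definition U (S : {set T}) (I : {set 'I_n}) : {set T} :=
  [set x in S | owner x \in I].

Lemma bigcup_compE S (I : {set 'I_n}) : \bigcup_(i in I) Defs.comp owner S i = U S I.
Proof.
apply/setP => x; rewrite inE; apply/bigcupP/andP.
  by case=> j jI; rewrite /Defs.comp /Mi !inE => /andP[-> /eqP ->].
by case=> xS oI; exists (owner x) => //; rewrite /Defs.comp /Mi !inE xS eqxx.
Qed.

Definition cc (k : nat) : R := ((k * 'C(n, k))%N)%:R.

Lemma PCE S : PC owner C S = \sum_(I : {set 'I_n}) C (U S I) / cc #|I|.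
Proof.
rewrite [RHS](bigD1 set0) //= cards0 /cc mul0n invr0 mulr0 add0r.
by apply: eq_bigr => I _; rewrite bigcup_compE.
Qed.

Lemma U_remove S i I : U (remove_comp owner S i) I = U S (I :\ i).
Proof.
apply/setP => x; rewrite /U /remove_comp /Mi !inE.
by case: (owner x == i); rewrite ?andbF.
Qed.

Lemma U_setT S : U S setT = S.
Proof. by apply/setP => x; rewrite !inE andbT. Qed.

Lemma U_set0 S : U S set0 = set0.
Proof. by apply/setP => x; rewrite !inE andbF. Qed.

Definition tog (i : 'I_n) (I : {set 'I_n}) := if i \in I then I :\ i else i |: I.

Lemma togK i : involutive (tog i).
Proof.
move=> I; rewrite /tog; case: (boolP (i \in I)) => iI.
  by rewrite setD11 setD1K.
by rewrite setU11 setU1K.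
Qed.

Lemma reindex_rm (G : {set 'I_n} -> R) i :
  \sum_(I : {set 'I_n} | i \in I) G I = \sum_(J : {set 'I_n} | i \notin J) G (i |: J) .
Proof.
rewrite (reindex_inj (inv_inj (togK i))) /=.
apply: eq_big => J; rewrite /tog; case: (boolP (i \in J)) => iJ.
- by rewrite setD11.
- by rewrite setU11.
- by rewrite setD11.
- by [].
Qed.

Lemma existence S (n0 : (0 < n)%N) :
  \sum_(i < n) (PC owner C S - PC owner C (remove_comp owner S i)) = C S.
Proof.
set F := fun I => C (U S I).
have E1 : forall i, PC owner C S - PC owner C (remove_comp owner S i)
   = \sum_(I : {set 'I_n} | i \in I) (F I / cc #|I| - F (I :\ i) / cc #|I|).
  move=> i; rewrite !PCE -sumrB (bigID (fun I : {set 'I_n} => i \in I)) /=.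
  rewrite [X in _ + X]big1 ?addr0; last first.
    by move=> I iI; rewrite U_remove setDE (setIidPl _) ?subrr //
      subsetC sub1set inE.
  by apply: eq_bigr => I _; rewrite U_remove.
under eq_bigr do rewrite E1 sumrB.
rewrite sumrB.
rewrite (exchange_big_dep predT) //=.
under [X in X - _]eq_bigr do rewrite sumr_const.
under [X in _ - X]eq_bigr do rewrite reindex_rm.
rewrite (exchange_big_dep predT) //=.
have E2 : forall J : {set 'I_n}, \sum_(i < n | i \notin J) F ((i |: J) :\ i) / cc #|i |: J|
   = F J / cc #|J|.+1 *+ (n - #|J|).
  move=> J; rewrite (eq_bigr (fun=> F J / cc #|J|.+1)); last first.
    by move=> i iJ; rewrite setU1K // cardsU1 iJ.
  rewrite sumr_const; congr (_ *+ _).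
  have -> : (n - #|J|)%N = #|~: J| by rewrite -(addKn #|J| #|~:J|) cardsC card_ord.
  by apply: eq_card => i; rewrite !inE.
under [X in _ - X]eq_bigr do rewrite E2.
rewrite -sumrB (bigD1 setT) //= big1 ?addr0; last first.
  move=> J JT.
  have kn : (#|J| < n)%N.
    have := @proper_card _ J [set: 'I_n]; rewrite cardsT card_ord.
    by apply; rewrite properT.
  have [J0|kpos] := posnP #|J|.
    move/eqP: J0; rewrite cards_eq0 => /eqP ->.
    by rewrite /F U_set0 C_norm !mul0r !mul0rn subrr.
  rewrite /cc mul_bin_left !helperK ?subrr //; try by rewrite bin_gt0 ltnW.
  by rewrite subn_gt0.
rewrite cardsT card_ord subnn mulr0n subr0 /F U_setT /cc binn muln1.
by rewrite -[_ *+ n]mulr_natr divfK // pnatr_eq0 -lt0n.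
Qed.
End Aux.

Theorem proposition3p1 (R : realFieldType) (T : finType) (n : nat)
  (owner : T -> 'I_n) (C : {set T} -> R)
  (C_nonneg : forall S, 0 <= C S) (C_norm : C set0 = 0) :
  (* existence: the explicit formula satisfies the conditions *)
  (PC owner C set0 = 0 /\
   forall S : {set T},
     \sum_(i < n) (PC owner C S - PC owner C (remove_comp owner S i)) = C S) /\
  (* uniqueness: any function satisfying the conditions equals it *)
  (forall P : {set T} -> R,
     P set0 = 0 ->
     (forall S : {set T},
        \sum_(i < n) (P S - P (remove_comp owner S i)) = C S) ->
     forall S : {set T}, P S = PC owner C S).
Proof.
have P0 : PC owner C set0 = 0.
  rewrite PCE big1 // => I _.
  by rewrite (_ : @U T n owner set0 I = set0) ?C_norm ?mul0r //; apply/setP => x; rewrite !inE.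
have EX : forall S : {set T},
     \sum_(i < n) (PC owner C S - PC owner C (remove_comp owner S i)) = C S.
  move=> S; have [n0|npos] := posnP n; last exact: existence.
  have -> : S = set0.
    apply/setP => x; rewrite inE; move: (owner x); rewrite n0; by case.
  by rewrite big1 ?C_norm // => i; by move: (ltn_ord i); rewrite [X in (_ < X)%N]n0.
split=> // P PS0 PS.
suff H : forall k (S : {set T}), (#|S| <= k)%N -> P S = PC owner C S.
  by move=> S; apply: (H #|S|).
elim=> [|k IH] S.
  by rewrite leqn0 cards_eq0 => /eqP ->; rewrite PS0 P0.
move=> Sk.
have [->|[x xS]] := set_0Vmem S; first by rewrite PS0 P0.
have E : \sum_(i < n) ((P S - PC owner C S) *+ (remove_comp owner S i != S)) =
   \sum_(i < n) (P S - P (remove_comp owner S i)) -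
   \sum_(i < n) (PC owner C S - PC owner C (remove_comp owner S i)).
  rewrite -sumrB.
  apply: eq_bigr => i _.
  case: eqP => [->|ne]; first by rewrite /= mulr0n !subrr.
  rewrite mulr1n (IH (remove_comp owner S i)); first by rewrite opprB addrA subrK.
  have : remove_comp owner S i \proper S.
    by rewrite properEneq subsetDl andbT; apply/eqP.
  move/proper_card => lt; by rewrite -ltnS (leq_trans lt).
rewrite PS EX subrr sumrMnr in E.
move/eqP: E; rewrite mulrn_eq0 => /orP[|]; last by rewrite subr_eq0 => /eqP.
rewrite sum_nat_eq0 => /forallP /(_ (owner x)).
rewrite eqb0 negbK => /eqP /setP /(_ x).
by rewrite /remove_comp /Mi !inE eqxx xS.
Qed.
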